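(* Let $J$ be a real symmetric $n\times n$ matrix with pairwise distinct eigenvalues, and consider the Euler–Arnold equations $$\dot M = [M,\Omega],\qquad M = \Omega J + J\Omega,$$ with $M,\Omega\in\mathfrak{so}(n)$, $\Omega$ being the unique skew-symmetric matrix with $\Omega J+J\Omega=M$. Then the equilibrium points (relative equilibria) of this system are exactly those $M$ whose $\Omega$ is obtained from the following data: (1) an orthogonal decomposition $\mathbb{R}^n = \left(\bigoplus_{i=1}^{k}\Pi_i\right)\oplus \Pi_0$ in which every $\Pi_i$ ($i=0,\dots,k$) is spanned by principal axes of inertia (eigenvectors of $J$), and every $\Pi_i$ with $i>0$ is nonzero and even-dimensional; (2) for each $i>0$, an angular velocity $\omega_i>0$ and a complex structure $I_i$ on $\Pi_i$ compatible with the Euclidean metric; namely, $\Omega$ acts as $\omega_i I_i$ on $\Pi_i$ for each $i>0$ and as $0$ on $\Pi_0$.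
   Context: $\mathfrak{so}(n)$ denotes the real skew-symmetric $n\times n$ matrices; $[X,Y]=XY-YX$. An equilibrium point means $M$ with $[M,\Omega]=0$. The principal axes of inertia are the eigenvector lines of $J$. A complex structure on a Euclidean space $\Pi$ compatible with the Euclidean metric is an orthogonal linear operator $I\colon\Pi\to\Pi$ with $I^2=-\mathrm{Id}$ (equivalently, a matrix in $\mathfrak{so}(2m)\cap\mathrm{SO}(2m)$ up to orientation conventions, i.e. skew-symmetric and orthogonal). *)

(* Defs.v *)
From HB Require Import structures.
From mathcomp Require Import all_boot all_order all_algebra.
From mathcomp Require Import reals.
Set Implicit Arguments. Unset Strict Implicit. Unset Printing Implicit Defensive.
Import Order.TTheory GRing.Theory Num.Theory.
Local Open Scope ring_scope.

Section Defs.
Variables (R : realType) (n : nat).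

(* Vectors of R^n are represented as row vectors 'rV_n; the action of a
   matrix A on x (the column product A x) is written, on rows, as x^T A^T. *)
Definition act (A : 'M[R]_n) (v : 'rV[R]_n) : 'rV[R]_n := v *m A^T.

Definition dot (u v : 'rV[R]_n) : R := (u *m v^T) 0 0.

Definition symmetric_mx (A : 'M[R]_n) : Prop := A^T = A.

Definition skew_mx (A : 'M[R]_n) : Prop := A^T = - A.

Definition commutator (X Y : 'M[R]_n) : 'M[R]_n := X *m Y - Y *m X.

Definition distinct_eigenvalues (J : 'M[R]_n) : Prop :=
  exists s : seq R, [/\ uniq s, size s = n &
     char_poly J = \prod_(a <- s) ('X - a%:P)].

Definition principal_axis (J : 'M[R]_n) (v : 'rV[R]_n) : Prop :=
  v != 0 /\ exists a : R, act J v = a *: v.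

Definition spanned_by_axes (J : 'M[R]_n) (P : 'M[R]_n) : Prop :=
  exists (m : nat) (B : 'M[R]_(m, n)),
    (forall i : 'I_m, principal_axis J (row i B)) /\ (B == P)%MS.

Definition orthogonal_subspaces (P Q : 'M[R]_n) : Prop :=
  forall u v : 'rV[R]_n, (u <= P)%MS -> (v <= Q)%MS -> dot u v = 0.

Definition complex_structure_on (P : 'M[R]_n) (I : 'M[R]_n) : Prop :=
  [/\ forall v, (v <= P)%MS -> (act I v <= P)%MS,
      forall v, (v <= P)%MS -> act I (act I v) = - v &
      forall u v, (u <= P)%MS -> (v <= P)%MS ->
        dot (act I u) (act I v) = dot u v].

(* Omega is obtained from the data of the statement. Pieces Pi_1..Pi_k are
   indexed by 'I_k, Pi_0 is Pi0. *)
Definition relative_equilibrium_form (J Om : 'M[R]_n) : Prop :=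
  exists (k : nat) (Pi : 'I_k -> 'M[R]_n) (Pi0 : 'M[R]_n)
         (omega : 'I_k -> R) (I : 'I_k -> 'M[R]_n),
    [/\
        row_full (\sum_(i < k) Pi i + Pi0)%MS
        /\ (forall i j : 'I_k, i != j -> orthogonal_subspaces (Pi i) (Pi j))
        /\ (forall i : 'I_k, orthogonal_subspaces (Pi i) Pi0),
        (forall i : 'I_k, spanned_by_axes J (Pi i)) /\ spanned_by_axes J Pi0,
        (forall i : 'I_k, (0 < \rank (Pi i))%N /\ ~~ odd (\rank (Pi i))),
        (forall i : 'I_k, 0 < omega i /\ complex_structure_on (Pi i) (I i)) &
        (forall i : 'I_k, forall v, (v <= Pi i)%MS ->
            act Om v = omega i *: act (I i) v)
        /\ (forall v, (v <= Pi0)%MS -> act Om v = 0)].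

End Defs.

(* Main.v *)
Require Import Defs.
From HB Require Import structures.
From mathcomp Require Import all_boot all_order all_algebra.
From mathcomp Require Import reals.
Import Order.TTheory GRing.Theory Num.Theory.
Local Open Scope ring_scope.
Set Implicit Arguments. Unset Strict Implicit. Unset Printing Implicit Defensive.

Section Gen.
Variables (R : realType) (n : nat).
Implicit Types (u v w : 'rV[R]_n) (A B P : 'M[R]_n).

Lemma dotE u v : dot u v = \sum_k u 0 k * v 0 k.
Proof. by rewrite /dot !mxE; apply: eq_bigr => k _; rewrite !mxE. Qed.

Lemma dotC u v : dot u v = dot v u.
Proof. by rewrite !dotE; apply: eq_bigr => k _; rewrite mulrC. Qed.

Lemma dotZl a u v : dot (a *: u) v = a * dot u v.
Proof. by rewrite !dotE mulr_sumr; apply: eq_bigr => k _; rewrite mxE mulrA. Qed.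

Lemma dotZr a u v : dot u (a *: v) = a * dot u v.
Proof. by rewrite dotC dotZl dotC. Qed.

Lemma dotNr u v : dot u (- v) = - dot u v.
Proof. by rewrite -scaleN1r dotZr mulN1r. Qed.

Lemma dotNl u v : dot (- u) v = - dot u v.
Proof. by rewrite dotC dotNr dotC. Qed.

Lemma dot_ge0 u : 0 <= dot u u.
Proof. by rewrite dotE; apply: sumr_ge0 => k _; rewrite -expr2 sqr_ge0. Qed.

Lemma dot_eq0 u : dot u u = 0 -> u = 0.
Proof.
rewrite dotE => /eqP; rewrite psumr_eq0; last by move=> k _; rewrite -expr2 sqr_ge0.
move=> /allP H; apply/rowP => k; rewrite mxE.
by have := H k (mem_index_enum k); rewrite /= mulf_eq0 orbb => /eqP.
Qed.

Lemma dot_mul u A v : dot (u *m A) v = dot u (v *m A^T).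
Proof. by rewrite /dot -mulmxA trmx_mul trmxK. Qed.

Lemma mulmx_tr_dot m (A B : 'M[R]_(m, n)) i j : (A *m B^T) i j = dot (row i A) (row j B).
Proof. by rewrite dotE mxE; apply: eq_bigr => k _; rewrite !mxE. Qed.

Lemma mul_tr_eq0 u v : (u *m v^T == 0) = (dot u v == 0).
Proof.
apply/eqP/eqP => [H|H]; first by rewrite /dot H mxE.
by apply/matrixP => i j; rewrite !ord1 [RHS]mxE.
Qed.

Lemma eig_coord (V A : 'M[R]_n) (d : 'I_n -> R) (mu : R) w :
  V \in unitmx -> (forall l, row l V *m A = d l *: row l V) -> w *m A = mu *: w ->
  w = \sum_(l | d l == mu) (w *m invmx V) 0 l *: row l V.
Proof.
move=> hV hd hw; set a := w *m invmx V.
have wE : w = a *m V by rewrite /a mulmxKV.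
pose b := \row_l (a 0 l * (d l - mu)).
have bV : b *m V = 0.
  rewrite mulmx_sum_row.
  have -> : \sum_i b 0 i *: row i V = a *m V *m A - mu *: (a *m V).
    rewrite [a *m V]mulmx_sum_row mulmx_suml scaler_sumr -sumrB; apply: eq_bigr => i _.
    by rewrite mxE -scalemxAl hd !scalerA -scalerBl mulrBr [mu * _]mulrC.
  by rewrite -wE hw subrr.
have b0 : b = 0 by rewrite -[b]mulmx1 -(mulmxV hV) mulmxA bV mul0mx.
rewrite {1}wE mulmx_sum_row (bigID (fun l => d l == mu)) /=.
rewrite [X in _ + X]big1 ?addr0 // => l hl.
have : b 0 l = 0 by rewrite b0 mxE.
rewrite mxE => /eqP; rewrite mulf_eq0 subr_eq0 (negbTE hl) orbF => /eqP ->.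
by rewrite scale0r.
Qed.

Lemma even_rank P A : (forall v, (v <= P)%MS -> (v *m A <= P)%MS) ->
  (forall v, (v <= P)%MS -> v *m A *m A = - v) -> ~~ odd (\rank P).
Proof.
move=> hinv hsq; set B := row_base P.
have BP : forall t, (row t B <= P)%MS.
  by move=> t; rewrite -(eq_row_base P) row_sub.
have BA : (B *m A <= B)%MS.
  by apply/row_subP => t; rewrite row_mul eq_row_base hinv // -(eq_row_base P) row_sub.
set X := B *m A *m pinvmx B.
have XB : X *m B = B *m A by rewrite mulmxKpV.
have BAA : B *m A *m A = - B.
  by apply/row_matrixP => t; rewrite 2!row_mul hsq ?BP //; apply/rowP => k; rewrite !mxE.
have XX : X *m X = (-1)%:M.
  apply: (row_free_inj (row_base_free P)) => /=.
  by rewrite -mulmxA XB mulmxA XB BAA mul_scalar_mx scaleN1r.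
have : \det X ^+ 2 = (-1) ^+ (\rank P).
  by rewrite expr2 -det_mulmx XX det_scalar.
case: (boolP (odd (\rank P))) => // ho.
rewrite -signr_odd ho expr1 => h.
by have := sqr_ge0 (\det X); rewrite h ler0N1.
Qed.

End Gen.
Section Basis.
Variables (R : realType) (n : nat).

Lemma eig_orth (J : 'M[R]_n) (u v : 'rV[R]_n) a b : J^T = J ->
  u *m J = a *: u -> v *m J = b *: v -> a != b -> dot u v = 0.
Proof.
move=> hJ hu hv hab.
have : a * dot u v = b * dot u v.
  by rewrite -dotZl -hu dot_mul hJ hv dotZr.
move/eqP; rewrite -subr_eq0 -mulrBl mulf_eq0 subr_eq0 (negbTE hab) /=.
by move/eqP.
Qed.

Lemma eigbasis (J : 'M[R]_n) : symmetric_mx J -> distinct_eigenvalues J ->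
  exists (V : 'M[R]_n) (s : 'I_n -> R),
    [/\ injective s, forall j, row j V *m J = s j *: row j V,
        forall j, row j V != 0,
        forall i j, i != j -> dot (row i V) (row j V) = 0 & V \in unitmx].
Proof.
rewrite /symmetric_mx => hJ [sq [usq ssq hchar]].
pose s (j : 'I_n) := nth 0 sq j.
have sinj : injective s.
  move=> i j /eqP; rewrite /s nth_uniq ?ssq // => /eqP; exact: val_inj.
have ev : forall j : 'I_n, exists v : 'rV[R]_n, v *m J = s j *: v /\ v != 0.
  move=> j; have : eigenvalue J (s j).
    by rewrite eigenvalue_root_char hchar root_prod_XsubC mem_nth ?ssq.
  by case/eigenvalueP => v h1 h2; exists v.
have [f hf] := fin_all_exists ev.
pose V := \matrix_j f j.
have hV1 : forall j, row j V *m J = s j *: row j V by move=> j; rewrite rowK; case: (hf j).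
have hV0 : forall j, row j V != 0 by move=> j; rewrite rowK; case: (hf j).
have hVo : forall i j, i != j -> dot (row i V) (row j V) = 0.
  move=> i j hij; apply: (eig_orth hJ (hV1 i) (hV1 j)).
  by apply: contra hij => /eqP /sinj ->.
exists V, s; split=> //.
have hVV : V *m V^T = diag_mx (\row_j dot (row j V) (row j V)).
  apply/matrixP => i j; rewrite mulmx_tr_dot !mxE.
  case: (eqVneq i j) => [->|hij]; first by rewrite mulr1n.
  by rewrite hVo // (negbTE hij) mulr0n.
rewrite unitmxE unitfE.
have : \det (V *m V^T) != 0.
  rewrite hVV det_diag; apply/prodf_neq0 => j _; rewrite mxE.
  by apply: contra (hV0 j) => /eqP /dot_eq0 ->.
by rewrite det_mulmx det_tr mulf_eq0 negb_or => /andP[].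
Qed.

Lemma commutatorE (J M Om : 'M[R]_n) : M = Om *m J + J *m Om ->
  commutator M Om = J *m (Om *m Om) - (Om *m Om) *m J.
Proof.
move=> ->; rewrite /commutator mulmxDl mulmxDr !mulmxA.
by rewrite [Om *m Om *m J + _]addrC opprD addrACA subrr add0r.
Qed.

End Basis.
Section Fwd.
Variables (R : realType) (n : nat) (J Om V : 'M[R]_n) (s : 'I_n -> R).
Hypotheses (hJ : J^T = J) (hOm : Om^T = - Om) (sinj : injective s)
 (hV1 : forall j, row j V *m J = s j *: row j V) (hV0 : forall j, row j V != 0)
 (hVo : forall i j, i != j -> dot (row i V) (row j V) = 0) (hVu : V \in unitmx)
 (hc : J *m (Om *m Om) = Om *m Om *m J).

Let T := Om^T.
Let T2 := T *m T.

Lemma T2J : T2 *m J = J *m T2.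
Proof. by have := congr1 trmx hc; rewrite !trmx_mul hJ /T2 /T => ->. Qed.

Lemma TT : T^T = - T.
Proof. by rewrite /T trmxK hOm opprK. Qed.

Definition cc j := (row j V *m T2 *m invmx V) 0 j.

Lemma rowT2 j : row j V *m T2 = cc j *: row j V.
Proof.
have hw : row j V *m T2 *m J = s j *: (row j V *m T2).
  by rewrite -mulmxA T2J mulmxA hV1 -scalemxAl.
rewrite {1}(eig_coord hVu hV1 hw) (big_pred1 j) //.
by move=> l /=; apply/eqP/eqP => [/sinj|->].
Qed.

Lemma dotV_gt0 j : 0 < dot (row j V) (row j V).
Proof.
rewrite lt_def dot_ge0 andbT; apply: contra (hV0 j) => /eqP /dot_eq0 ->.
by [].
Qed.

Lemma dotT j : cc j * dot (row j V) (row j V) = - dot (row j V *m T) (row j V *m T).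
Proof. by rewrite -dotZl -rowT2 /T2 mulmxA dot_mul TT mulmxN dotNr. Qed.

Lemma cc_le0 j : cc j <= 0.
Proof.
have := dotT j; rewrite -(pmulr_lle0 _ (dotV_gt0 j)) => ->.
by rewrite oppr_le0 dot_ge0.
Qed.

Lemma T_vanish j : cc j = 0 -> row j V *m T = 0.
Proof. by move=> h; apply: dot_eq0; apply/eqP; rewrite -oppr_eq0 -dotT h mul0r. Qed.

Lemma T2_eig_sub (K : 'M[R]_n) (m : R) (w : 'rV[R]_n) :
  (forall l, cc l = m -> (row l V <= K)%MS) -> w *m T2 = m *: w -> (w <= K)%MS.
Proof.
move=> H hw; rewrite (eig_coord hVu rowT2 hw); apply: summx_sub => l hl.
by apply: scalemx_sub; apply: H; apply/eqP.
Qed.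

Definition Bm (G : {set 'I_n}) : 'M[R]_(#|G|, n) := \matrix_(t < #|G|) row (enum_val t) V.
Definition Pc (G : {set 'I_n}) : 'M[R]_n := <<Bm G>>%MS.

Lemma row_Pc (G : {set 'I_n}) j : j \in G -> (row j V <= Pc G)%MS.
Proof.
move=> jG; rewrite /Pc genmxE.
by have := row_sub (enum_rank_in jG j) (Bm G); rewrite rowK enum_rankK_in.
Qed.

Lemma Pc_sub (G : {set 'I_n}) (K : 'M[R]_n) : (forall j, j \in G -> (row j V <= K)%MS) -> (Pc G <= K)%MS.
Proof.
move=> H; rewrite /Pc genmxE; apply/row_subP => t; rewrite rowK; apply: H.
exact: enum_valP.
Qed.

Lemma Pc_mul (G : {set 'I_n}) (A K : 'M[R]_n) : (forall j, j \in G -> (row j V *m A <= K)%MS) ->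
  forall u : 'rV[R]_n, (u <= Pc G)%MS -> (u *m A <= K)%MS.
Proof.
move=> H u; rewrite /Pc genmxE => /submxP [x ->].
rewrite -mulmxA; apply: submx_trans (submxMl x _) _; apply/row_subP => t.
rewrite row_mul rowK; apply: H; exact: enum_valP.
Qed.

Lemma Pc_eig (G : {set 'I_n}) (A : 'M[R]_n) m : (forall j, j \in G -> row j V *m A = m *: row j V) ->
  forall u : 'rV[R]_n, (u <= Pc G)%MS -> u *m A = m *: u.
Proof.
move=> H u hu; apply/eqP; rewrite -subr_eq0 -mul_mx_scalar -mulmxBr -sub_kermx.
apply: submx_trans hu _; apply: Pc_sub => j jG.
by rewrite sub_kermx mulmxBr mul_mx_scalar H // subrr.
Qed.

Lemma spanned_Pc (G : {set 'I_n}) : spanned_by_axes J (Pc G).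
Proof.
exists #|G|, (Bm G); split.
  move=> t; rewrite rowK; split=> //; exists (s (enum_val t)).
  by rewrite /act hJ hV1.
by apply/eqmxP; exact: eqmx_sym (genmxE _).
Qed.

Lemma orth_Pc (G H : {set 'I_n}) : (forall a b, a \in G -> b \in H -> a != b) ->
  orthogonal_subspaces (Pc G) (Pc H).
Proof.
move=> hGH u v hu hv.
have hG : (Pc G <= kermx v^T)%MS.
  apply: Pc_sub => a aG; rewrite sub_kermx mul_tr_eq0 dotC -mul_tr_eq0 -sub_kermx.
  apply: submx_trans hv _; apply: Pc_sub => b bH; rewrite sub_kermx mul_tr_eq0.
  by rewrite hVo // eq_sym hGH.
by have := submx_trans hu hG; rewrite sub_kermx mul_tr_eq0 => /eqP.
Qed.

Lemma actZ (a : R) (A : 'M[R]_n) v : act (a *: A) v = a *: act A v.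
Proof.
rewrite /act scalemxAr; congr (_ *m _); apply/matrixP => i j; rewrite !mxE //.
Qed.


Lemma T2T : T *m T2 = T2 *m T.
Proof. by rewrite /T2 mulmxA. Qed.

Lemma fwd : relative_equilibrium_form J Om.
Proof.
pose mu j := - cc j.
have mu_ge0 j : 0 <= mu j by rewrite /mu oppr_ge0 cc_le0.
pose L := undup [seq x <- map mu (enum 'I_n) | 0 < x].
pose k := size L.
have Lpos (i : 'I_k) : 0 < L`_i.
  by have := mem_nth 0 (ltn_ord i); rewrite mem_undup mem_filter => /andP[].
have Lex (i : 'I_k) : exists j, mu j = L`_i.
  have := mem_nth 0 (ltn_ord i); rewrite mem_undup mem_filter.
  by case/andP => _ /mapP [j _ hj]; exists j; rewrite hj.
have Linj (i i' : 'I_k) : L`_i = L`_i' -> i = i'.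
  move/eqP; rewrite nth_uniq ?undup_uniq // => /eqP; exact: val_inj.
have inL j : 0 < mu j -> mu j \in L.
  by move=> h; rewrite mem_undup mem_filter h map_f ?mem_enum.
pose Gi (i : 'I_k) := [set l | mu l == L`_i].
pose G0 := [set l | mu l == 0].
pose om (i : 'I_k) := Num.sqrt (L`_i).
have om_gt0 i : 0 < om i by rewrite sqrtr_gt0.
have om2 i : om i ^+ 2 = L`_i by rewrite sqr_sqrtr // ltW.
have aaL i : (om i)^-1 * (om i)^-1 * L`_i = 1.
  by rewrite -om2 expr2 -invfM mulVf // mulf_neq0 // lt0r_neq0.
pose I i := (om i)^-1 *: Om.
have hact (a : R) v : act (a *: Om) v = a *: (v *m T) by rewrite actZ.
have eigI i : forall u : 'rV[R]_n, (u <= Pc (Gi i))%MS -> u *m T2 = (- L`_i) *: u.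
  by apply: Pc_eig => j; rewrite inE => /eqP h; rewrite rowT2 -h /mu opprK.
have invI i : forall u : 'rV[R]_n, (u <= Pc (Gi i))%MS -> (u *m T <= Pc (Gi i))%MS.
  apply: Pc_mul => j; rewrite inE => /eqP h.
  apply: (T2_eig_sub (m := cc j)).
    by move=> l hl; apply: row_Pc; rewrite inE; apply/eqP; rewrite -h /mu hl.
  by rewrite -mulmxA T2T mulmxA rowT2 -scalemxAl.
have sqI i (u : 'rV[R]_n) : (u <= Pc (Gi i))%MS -> act (I i) (act (I i) u) = - u.
  move=> hu; rewrite /I !hact -scalemxAl scalerA -mulmxA.
  rewrite -/T2 (eigI i) // scalerA mulrN aaL scaleN1r //.
have dotI i (u v : 'rV[R]_n) : (u <= Pc (Gi i))%MS -> (v <= Pc (Gi i))%MS ->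
    dot (act (I i) u) (act (I i) v) = dot u v.
  move=> hu hv; rewrite /I !hact dotZl dotZr dot_mul TT mulmxN dotNr -mulmxA.
  by rewrite -/T2 (eigI i) // dotZr mulNr opprK !mulrA aaL mul1r.
exists k, (fun i => Pc (Gi i)), (Pc G0), om, I; split.
- split.
    have hV : (1%:M <= V)%MS by rewrite sub1mx row_full_unit.
    rewrite -sub1mx; apply: submx_trans hV _.
    apply/row_subP => j; have := mu_ge0 j; rewrite le_eqVlt => /orP [/eqP h|h].
      by apply: submx_trans (addsmxSr _ _); apply: row_Pc; rewrite inE -h.
    apply: submx_trans (addsmxSl _ _).
    have hi : (index (mu j) L < k)%N by rewrite index_mem inL.
    apply: (sumsmx_sup (Ordinal hi)) => //; apply: row_Pc.
    by rewrite inE /= nth_index ?inL.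
  split.
    move=> i j hij; apply: orth_Pc => a b; rewrite !inE => /eqP ha /eqP hb.
    apply: contra hij => /eqP hab; rewrite hab in ha; apply/eqP; apply: Linj.
    by rewrite -ha -hb.
  move=> i; apply: orth_Pc => a b; rewrite !inE => /eqP ha /eqP hb.
  by apply/eqP => hab; have := Lpos i; rewrite -ha hab hb ltxx.
- by split => [i|]; exact: spanned_Pc.
- move=> i; split.
    rewrite lt0n mxrank_eq0; have [j hj] := Lex i; apply/negP => /eqP h0.
    have := row_Pc (G := Gi i) (j := j); rewrite inE hj eqxx h0 submx0.
    by move=> /(_ isT); rewrite (negbTE (hV0 j)).
  apply: (even_rank (A := (I i)^T)).
    move=> v hv; have := hact ((om i)^-1) v; rewrite /act /I => ->.
    by rewrite scalemx_sub // invI.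
  by move=> v hv; have := sqI i v hv.
- move=> i; split => //; split.
  + by move=> v hv; rewrite /I hact scalemx_sub // invI.
  + exact: sqI.
  + exact: dotI.
- split.
    move=> i v hv; rewrite /I hact scalerA mulfV ?scale1r //.
    exact: lt0r_neq0.
  move=> v hv; have : (v <= kermx T)%MS.
    apply: submx_trans hv _; apply: Pc_sub => j; rewrite inE => /eqP h.
    by rewrite sub_kermx T_vanish //; apply/eqP; rewrite -oppr_eq0; apply/eqP.
  by rewrite sub_kermx => /eqP.
Qed.

End Fwd.
Section Bwd.
Variables (R : realType) (n : nat) (J Om : 'M[R]_n).
Hypothesis hJ : J^T = J.

Lemma spanned_J P : spanned_by_axes J P ->
  forall u : 'rV[R]_n, (u <= P)%MS -> (u *m J <= P)%MS.
Proof.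
case=> m [B [hB /eqmxP eBP]] u; rewrite -eBP => /submxP [x ->].
rewrite -mulmxA; apply: submx_trans (submxMl x _) _; apply/row_subP => t.
rewrite row_mul; have [_ [a ha]] := hB t; move: ha; rewrite /act hJ => ->.
by apply: scalemx_sub; rewrite -eBP row_sub.
Qed.

Lemma bwd : relative_equilibrium_form J Om ->
  J *m (Om *m Om) = Om *m Om *m J.
Proof.
case=> k [Pi [Pi0 [om [I [[hfull [_ _]] [hsp hsp0] _ hcs [hOmI hOm0]]]]]].
pose T := Om^T.
pose D := T *m T *m J - J *m T *m T.
have vecD : forall P : 'M[R]_n, (forall u : 'rV[R]_n, (u <= P)%MS -> (u *m J <= P)%MS) ->
   forall c : R, (forall u : 'rV[R]_n, (u <= P)%MS -> u *m T *m T = c *: u) ->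
   (P <= kermx D)%MS.
  move=> P hPJ c hc; apply/row_subP => t; rewrite sub_kermx.
  have ht := row_sub t P.
  rewrite /D mulmxBr !mulmxA hc // -scalemxAl hc ?hPJ //.
  by rewrite subrr.
have hK : (\sum_(i < k) Pi i + Pi0 <= kermx D)%MS.
  rewrite addsmx_sub; apply/andP; split.
    apply/sumsmx_subP => i _; apply: (vecD _ (spanned_J (hsp i)) (- om i ^+ 2)).
    move=> u hu; have [_ [hinv hsq _]] := hcs i.
    have hT : forall v : 'rV[R]_n, (v <= Pi i)%MS -> v *m T = om i *: act (I i) v.
      by move=> v hv; rewrite -hOmI.
    rewrite [u *m T]hT // -scalemxAl hT ?hinv // hsq // scalerA scalerN.
    by rewrite -expr2 scaleNr.
  apply: (vecD _ (spanned_J hsp0) 0) => u hu.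
  by have := hOm0 u hu; rewrite /act -/T => ->; rewrite mul0mx scale0r.
have D0 : D = 0.
  have := submx_trans (submx_full 1%:M hfull) hK.
  by rewrite sub_kermx mul1mx => /eqP.
have := congr1 trmx D0; rewrite /D linearB /= !trmx_mul /T trmxK hJ trmx0.
by move/eqP; rewrite subr_eq0 => /eqP ->; rewrite !mulmxA.
Qed.

End Bwd.

Unset Implicit Arguments.
Set Strict Implicit.

Theorem corollary1 (R : realType) (n : nat) (J : 'M[R]_n)
    (hJsym : symmetric_mx J) (hJdist : distinct_eigenvalues J)
    (M Om : 'M[R]_n) (hM : skew_mx M) (hOm : skew_mx Om)
    (hMOm : M = Om *m J + J *m Om) :
  commutator M Om = 0 <-> relative_equilibrium_form J Om.
Proof.
rewrite (commutatorE hMOm); split.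
  move/eqP; rewrite subr_eq0 => /eqP hc.
  have [V [s [sinj hV1 hV0 hVo hVu]]] := eigbasis hJsym hJdist.
  exact: (fwd hJsym hOm sinj hV1 hV0 hVo hVu hc).
by move=> h; rewrite (bwd hJsym h) subrr.
Qed.
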